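(* The support of the invariant probability $\mu$ of the kernel $M$ is the whole segment $[0,1/2]$.
   Context: $M$ is the Markov kernel $M(x,\cdot)=\frac16\sum_{i=1}^6\delta_{z_i(x)}$ on $[0,1/2]$, where for $x\in[0,1/2]$: $z_1(x)=\frac{3x}{2+2x}$; $z_2(x)=\frac{3x}{2-x}$ if $x<2/7$ and $\frac{2-4x}{2-x}$ if $x\ge2/7$; $z_3(x)=\frac{1+x}{3-3x}$ if $x<1/5$ and $\frac{2-4x}{3-3x}$ if $x\ge1/5$; $z_4(x)=\frac{1+x}{4-2x}$; $z_5(x)=\frac{1-2x}{4-2x}$; $z_6(x)=\frac{1-2x}{3}$. $M$ has a unique invariant probability measure, denoted $\mu$. *)

(* Defs.v *)
From HB Require Import structures.
From mathcomp Require Import all_boot all_order all_algebra.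
From mathcomp Require Import all_classical all_reals all_analysis.
Set Implicit Arguments. Unset Strict Implicit. Unset Printing Implicit Defensive.
Import Order.TTheory GRing.Theory Num.Theory.
Import numFieldNormedType.Exports.
Local Open Scope classical_set_scope.
Local Open Scope ring_scope.

Section Kernel.
Variable R : realType.

(* The six maps z_1..z_6 on [0,1/2] (formulas taken verbatim; they are only
   ever used for x in [0,1/2]). *)
Definition z1 (x : R) : R := (3 * x) / (2 + 2 * x).
Definition z2 (x : R) : R :=
  if x < 2 / 7 then (3 * x) / (2 - x) else (2 - 4 * x) / (2 - x).
Definition z3 (x : R) : R :=
  if x < 1 / 5 then (1 + x) / (3 - 3 * x) else (2 - 4 * x) / (3 - 3 * x).
Definition z4 (x : R) : R := (1 + x) / (4 - 2 * x).
Definition z5 (x : R) : R := (1 - 2 * x) / (4 - 2 * x).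
Definition z6 (x : R) : R := (1 - 2 * x) / 3.

Definition Mker (x : R) (A : set R) : \bar R :=
  ((6%:R^-1)%:E * (\d_(z1 x) A + \d_(z2 x) A + \d_(z3 x) A
                 + \d_(z4 x) A + \d_(z5 x) A + \d_(z6 x) A))%E.

Definition M_invariant (mu : probability R R) : Prop :=
  forall A : set R, measurable A ->
    mu A = (\int[mu]_(x in `[0%R, 2^-1%R]) Mker x A)%E.

Definition msupport (mu : probability R R) : set R :=
  [set x | forall e : R, 0 < e -> (0 < mu (ball x e))%E].
End Kernel.

(* Main.v *)
Require Import Defs.
From HB Require Import structures.
From mathcomp Require Import all_boot all_order all_algebra.
From mathcomp Require Import all_classical all_reals all_analysis.
From mathcomp Require Import ring lra.
Import Order.TTheory GRing.Theory Num.Theory.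
Import numFieldNormedType.Exports.
Local Open Scope classical_set_scope.
Local Open Scope ring_scope.

Import HBNNSimple.

Local Open Scope ereal_scope.
Lemma le_int_gen d (T : measurableType d) (R : realType) (mu : {measure set T -> \bar R})
  (D A : set T) (mD : measurable D) (mA : measurable A) (f : T -> \bar R) (r : R) (r0 : (0 <= r)%R) :
  (forall x, 0 <= f x) -> (forall x, D x -> A x -> r%:E <= f x) ->
  r%:E * mu (A `&` D) <= \int[mu]_(x in D) f x.
Proof.
move=> f0 f1.
have mAD : measurable (A `&` D) by exact: measurableI.
rewrite ge0_integralE//.
rewrite -(sintegral_indic mu (A `&` D)).
have -> : \1_(A `&` D) = indic_nnsfun R mAD :> (T -> R) by [].
rewrite -sintegralrM.
apply: ereal_sup_ubound => /=.
exists (scale_nnsfun (indic_nnsfun R mAD) r0) => //= x.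
have -> : measurable_realfun.mindic R mAD x = \1_(A `&` D) x by [].
rewrite indicE /patch; case: ifPn => [xD|xD].
- have xD' : D x by rewrite inE in xD.
  case: (pselect (A x)) => Ax.
  + rewrite mem_set //= mulr1; exact: f1.
  + rewrite memNset /= ?mulr0; first exact: f0.
    by case.
- rewrite memNset /= ?mulr0 //.
  by move=> -[_ /mem_set]; rewrite (negbTE xD).
Qed.
Local Close Scope ereal_scope.

Section R.
Variable R : realType.

Lemma lipaux (u v p : R) : u * p = 6 * v -> 9 <= p -> `|u| <= 2/3 * `|v|.
Proof.
move=> H p9.
have p0 : 0 <= p by lra.
have H' : `|u| * p = 6 * `|v|.
  by rewrite -(ger0_norm p0) -normrM H normrM ger0_norm.
have := normr_ge0 u; have := normr_ge0 v; nra.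
Qed.

Lemma z4_lip (x y : R) : 0 <= x <= 2^-1 -> 0 <= y <= 2^-1 ->
  `|z4 x - z4 y| <= 2/3 * `|x - y|.
Proof.
move=> /andP[x0 x1] /andP[y0 y1].
apply: (@lipaux _ _ ((4 - 2*x) * (4 - 2*y))); last by nra.
rewrite /z4; field.
apply/andP; split; apply/eqP; lra.
Qed.

Lemma z5_lip (x y : R) : 0 <= x <= 2^-1 -> 0 <= y <= 2^-1 ->
  `|z5 x - z5 y| <= 2/3 * `|x - y|.
Proof.
move=> /andP[x0 x1] /andP[y0 y1].
rewrite -[`|z5 x - z5 y|]normrN.
apply: (@lipaux _ _ ((4 - 2*x) * (4 - 2*y))); last by nra.
rewrite /z5; field.
apply/andP; split; apply/eqP; lra.
Qed.

Lemma preim (y : R) : 0 <= y <= 2^-1 -> exists y', 0 <= y' <= 2^-1 /\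
  (z4 y' = y \/ z5 y' = y).
Proof.
move=> /andP[y0 y1].
case: (lerP y (4^-1)) => hy.
- exists ((1 - 4*y)/(2*(1-y))); split.
  + have hd : 0 < 2*(1-y) by lra.
    apply/andP; split; first by apply: divr_ge0; lra.
    rewrite ler_pdivrMr //; lra.
  + right; rewrite /z5; field.
    by apply/andP; split; apply/eqP; lra.
- exists ((4*y - 1)/(1 + 2*y)); split.
  + have hd : 0 < 1 + 2*y by lra.
    apply/andP; split; first by apply: divr_ge0; lra.
    rewrite ler_pdivrMr //; lra.
  + left; rewrite /z4; field.
    by apply/andP; split; apply/eqP; lra.
Qed.

Local Notation I := (`[0%R, 2^-1%R]%classic : set R).

Lemma mI : measurable I.
Proof. exact: measurable_itv. Qed.

Lemma muI (mu : probability R R) (A : set R) : mu I = 1%E -> measurable A ->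
  mu A = mu (A `&` I).
Proof.
move=> hI mA.
rewrite (measureDI mu mA mI).
rewrite [X in (X + _)%E](_ : _ = 0%E) ?add0e //.
apply/eqP; rewrite eq_le measure_ge0 andbT.
have <- : mu (~` I) = 0%E by rewrite probability_setC ?mI // hI subee.
apply: le_measure; rewrite ?inE.
- exact: measurableD mA mI.
- exact: measurableC mI.
- by move=> t [].
Qed.

Lemma Mker_ge0 (x : R) (B : set R) : (0 <= Mker x B)%E.
Proof.
rewrite /Mker; apply: mule_ge0; first by rewrite lee_fin.
by rewrite !diracE; rewrite -!EFinD lee_fin; apply: addr_ge0 => //; do 4 apply: addr_ge0.
Qed.

Lemma Mker_z4 (x : R) (B : set R) : z4 x \in B -> ((6%:R^-1)%:E <= Mker x B)%E.
Proof.
move=> h; rewrite /Mker !diracE h -!EFinD -EFinM lee_fin.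
set a := (z1 x \in B)%:R; set b := (z2 x \in B)%:R; set c := (z3 x \in B)%:R.
set e := (z5 x \in B)%:R; set f := (z6 x \in B)%:R.
have : 0 <= a by rewrite ler0n. have : 0 <= b by rewrite ler0n.
have : 0 <= c by rewrite ler0n. have : 0 <= e by rewrite ler0n.
have : 0 <= f by rewrite ler0n. 
rewrite /= ; lra.
Qed.

Lemma Mker_z5 (x : R) (B : set R) : z5 x \in B -> ((6%:R^-1)%:E <= Mker x B)%E.
Proof.
move=> h; rewrite /Mker !diracE h -!EFinD -EFinM lee_fin.
set a := (z1 x \in B)%:R; set b := (z2 x \in B)%:R; set c := (z3 x \in B)%:R.
set e := (z4 x \in B)%:R; set f := (z6 x \in B)%:R.
have : 0 <= a by rewrite ler0n. have : 0 <= b by rewrite ler0n.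
have : 0 <= c by rewrite ler0n. have : 0 <= e by rewrite ler0n.
have : 0 <= f by rewrite ler0n. 
rewrite /= ; lra.
Qed.

Lemma posball (mu : probability R R) : mu I = 1%E -> M_invariant mu ->
  forall n (y : R), 0 <= y <= 2^-1 -> (0 < mu (ball y ((2/3)^+n)))%E.
Proof.
move=> hI hinv; elim=> [|n IH] y hy.
- rewrite expr0; apply: (@lt_le_trans _ _ (mu I)); first by rewrite hI.
  apply: le_measure; rewrite ?inE; [exact: mI | exact: measurable_realfun.measurable_ball |].
  move=> t; rewrite /= in_itv /= => /andP[t0 t1].
  rewrite -ball_normE /=; move: hy => /andP[y0 y1].
  rewrite ltr_norml; apply/andP; split; lra.
- have [y' [hy' hz]] := preim y hy.
  have := IH _ hy'.
  set A := ball y' _ => muA.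
  set B := ball y _.
  have mA : measurable A by exact: measurable_realfun.measurable_ball.
  have mB : measurable B by exact: measurable_realfun.measurable_ball.
  rewrite (hinv B mB).
  have key : forall x, I x -> A x -> ((6%:R^-1)%:E <= Mker x B)%E.
    move=> x Ix Ax.
    have hx : 0 <= x <= 2^-1 by move: Ix; rewrite /= in_itv.
    have hA : `|y' - x| < (2/3)^+n by move: Ax; rewrite /A -ball_normE.
    have lt : 2/3 * `|x - y'| < (2/3)^+n.+1.
      by rewrite exprS distrC ltr_pM2l //; lra.
    case: hz => hz.
    + apply: Mker_z4; rewrite inE /B -ball_normE /= -hz distrC.
      exact: le_lt_trans (z4_lip x y' hx hy') lt.
    + apply: Mker_z5; rewrite inE /B -ball_normE /= -hz distrC.
      exact: le_lt_trans (z5_lip x y' hx hy') lt.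
  have r0 : (0 <= (6%:R : R)^-1)%R by rewrite invr_ge0.
  have Hle := @le_int_gen _ _ _ mu I A mI mA (fun x => Mker x B) (6%:R^-1) r0 (@Mker_ge0^~ B) key.
  apply: lt_le_trans Hle.
  rewrite [X in (_ * X)%E](_ : _ = mu A); last exact: (esym (muI mu A hI mA)).
  apply: mule_gt0 => //.
Qed.

End R.

Theorem lemma17 (R : realType) (mu : probability R R) :
  mu `[0%R, 2^-1%R]%classic = 1%E ->
  M_invariant mu ->
  msupport mu = `[0%R, 2^-1%R]%classic.
Proof.
move=> hI hinv; apply/seteqP; split => x.
- rewrite /msupport /= => hx; rewrite in_itv /=.
  apply/negPn/negP; rewrite negb_and -!ltNge => hout.
  have [e [e0 he]] : exists e : R, 0 < e /\ ball x e `&` `[0%R, 2^-1%R]%classic = set0.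
    case/orP: hout => hx'.
    + exists (- x); split; first lra.
      apply/seteqP; split => // t [] ; rewrite -ball_normE /= in_itv /=.
      rewrite ltr_norml => /andP[h1 h2] /andP[t0 t1]; exfalso; clear hx hI hinv; lra.
    + exists (x - 2^-1); split; first lra.
      apply/seteqP; split => // t [] ; rewrite -ball_normE /= in_itv /=.
      rewrite ltr_norml => /andP[h1 h2] /andP[t0 t1]; exfalso; clear hx hI hinv; lra.
  have := hx e e0; rewrite (@muI R mu _ hI (measurable_realfun.measurable_ball x e)) he measure0.
  by rewrite ltxx.
- move=> Ix e e0.
  have hx : 0 <= x <= 2^-1 by move: Ix; rewrite /= in_itv.
  have h23 : `|2/3 : R| < 1 by rewrite ger0_norm; lra.
  have /cvgr0_norm_lt/(_ e e0) [N _ HN] := cvg_expr h23.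
  have hN := HN N (leqnn N).
  apply: (lt_le_trans (@posball R mu hI hinv N x hx)).
  apply: le_measure; rewrite ?inE; try exact: measurable_realfun.measurable_ball.
  apply: le_ball; apply: ltW; apply: le_lt_trans hN.
  exact: ler_norm.
Qed.
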